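(* Let $p(x,y)$ be a real polynomial in two variables and let $n\ge 2$. Then \[ \langle S_{2,n}\,p(S_{2,n},n)\rangle_n=\frac{n}{2}\langle p(S_{2,n},n)\rangle_n-\frac{n(n-2)}{2(2n-3)}\langle p(S_{2,n-1},n)\rangle_{n-1}, \] where $\langle\cdot\rangle_n$ denotes expectation over $(\Omega_n,P_n)$ and $\langle\cdot\rangle_{n-1}$ expectation over $(\Omega_{n-1},P_{n-1})$.
   Context: For $n\ge 1$, let $\Omega_n$ be the set of rooted plane (ordered) full binary trees with $n$ leaves (every internal node has exactly two children, left and right distinguished; $\Omega_1$ consists of the single-vertex tree). $P_n$ is the uniform probability measure on $\Omega_n$. Horton–Strahler ordering: every leaf has order 1; an internal node whose two children have different orders $r_1\neq r_2$ has order $\max\{r_1,r_2\}$; an internal node whose two children both have order $r$ has order $r+1$. A branch of order $r$ is a maximal connected path consisting of nodes all of order $r$. $S_{2,n}(\tau)$ is the number of branches of order $2$ in $\tau\in\Omega_n$. *)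

(* Defs.v *)
From HB Require Import structures.
From mathcomp Require Import all_boot all_order all_algebra.
From mathcomp Require Import mpoly zify.
Set Implicit Arguments. Unset Strict Implicit. Unset Printing Implicit Defensive.
Import Order.TTheory GRing.Theory Num.Theory.

Inductive tree : Type := Leaf : tree | Node : tree -> tree -> tree.

Fixpoint tree_eqb (s t : tree) : bool :=
  match s, t with
  | Leaf, Leaf => true
  | Node l1 r1, Node l2 r2 => tree_eqb l1 l2 && tree_eqb r1 r2
  | _, _ => false
  end.

Lemma tree_eqP : Equality.axiom tree_eqb.
Proof.
elim=> [|l1 IHl r1 IHr] [|l2 r2] /=; try by constructor.
case: (IHl l2) => [->|H]; last by constructor; case.
case: (IHr r2) => [->|H]; last by constructor; case.
by constructor.
Qed.

HB.instance Definition _ := hasDecEq.Build tree tree_eqP.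

Fixpoint leaves (t : tree) : nat :=
  match t with Leaf => 1 | Node l r => leaves l + leaves r end.

Fixpoint hs (t : tree) : nat :=
  match t with
  | Leaf => 1
  | Node l r => let a := hs l in let b := hs r in
                if a == b then a.+1 else maxn a b
  end.

(* Number of branches of order k: each branch (maximal path of nodes of
   order k) is counted through its top node, i.e. a node of order k that is
   the root or whose parent has order different from k.  [par] records
   whether the parent of the current node has order k. *)
Fixpoint branch_tops (k : nat) (t : tree) (par : bool) : nat :=
  ((hs t == k) && ~~ par) +
  match t with
  | Leaf => 0
  | Node l r => branch_tops k l (hs t == k) + branch_tops k r (hs t == k)
  end.

Definition branches (k : nat) (t : tree) : nat := branch_tops k t false.

Definition S2 (t : tree) : nat := branches 2 t.

(* Enumeration of Omega_n: all trees with exactly n leaves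
   (fuel m, always called with m = n). *)
Fixpoint trees_rec (m n : nat) : seq tree :=
  match m with
  | 0 => [::]
  | m'.+1 =>
    if n == 1 then [:: Leaf]
    else flatten [seq [seq Node l r | l <- trees_rec m' k, r <- trees_rec m' (n - k)]
                 | k <- iota 1 n.-1]
  end.

Definition Omega (n : nat) : seq tree := trees_rec n n.

Definition expect {R : fieldType} (n : nat) (f : tree -> R) : R :=
  (\sum_(t <- Omega n) f t) / (size (Omega n))%:R.

Definition ev2 {R : comNzRingType} (p : {mpoly R[2]}) (x y : R) : R :=
  p.@[fun i : 'I_2 => if val i == 0 then x else y].

(* Sanity facts: Omega n is exactly the (duplicate-free) list of all trees
   with n leaves, so [expect] is the expectation under the uniform P_n. *)
Lemma leaves_gt0 t : 0 < leaves t.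
Proof. by elim: t => //= l IH r _; rewrite addn_gt0 IH. Qed.

Lemma mem_trees_rec m n t : n <= m -> (t \in trees_rec m n) = (leaves t == n).
Proof.
elim: m n t => [|m IH] n t Hn /=.
  by rewrite in_nil; have := leaves_gt0 t; move: Hn; rewrite leqn0 => /eqP ->; case: (leaves t).
case: eqP => [->|Hn1].
  rewrite inE; case: t => [|l r] //=.
  have := leaves_gt0 l; have := leaves_gt0 r => ? ?.
  have -> : (Node l r == Leaf) = false by apply/eqP.
  apply/esym/negbTE; lia.
case: t => [|l r].
  have -> : (leaves Leaf == n) = false by apply/eqP => /= E; apply: Hn1.
  apply/negbTE/flattenP => -[s /mapP[k _ ->] /allpairsP[[a b] [_ _ /= E]]] //.
apply/flattenP/eqP => [[s /mapP[k Hk ->] /allpairsP[[a b] [Ha Hb /= [-> ->]]]]|E].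
  rewrite mem_iota in Hk.
  move: Ha Hb; rewrite !IH; try lia.
  move=> /= /eqP Ha' /eqP Hb'; lia.
have:= leaves_gt0 l; have:= leaves_gt0 r => Hr Hl; rewrite /= in E.
exists [seq Node a b | a <- trees_rec m (leaves l), b <- trees_rec m (n - leaves l)].
  apply/mapP; exists (leaves l); last by []. rewrite mem_iota /=; lia.
apply: allpairs_f; rewrite IH; try lia; apply/eqP; lia.
Qed.

Lemma uniq_flatten_map (A B : eqType) (g : A -> seq B) (s : seq A) :
  uniq s -> (forall x, x \in s -> uniq (g x)) ->
  (forall x y z, x \in s -> y \in s -> z \in g x -> z \in g y -> x = y) ->
  uniq (flatten (map g s)).
Proof.
elim: s => //= x s IH /andP[xs us] Hu Hd.
rewrite cat_uniq Hu ?mem_head // IH //; last first.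
- by move=> a b z Ha Hb; apply: Hd; rewrite inE ?Ha ?Hb orbT.
- by move=> a Ha; apply: Hu; rewrite inE Ha orbT.
rewrite andbT; apply/hasPn => z /flattenP[t /mapP[y ys ->] zy]; apply/negP => zx.
have yxs : y \in x :: s by rewrite inE ys orbT.
have E : x = y := Hd _ _ _ (mem_head _ _) yxs zx zy.
by rewrite E ys in xs.
Qed.

Lemma uniq_trees_rec m n : n <= m -> uniq (trees_rec m n).
Proof.
elim: m n => [|m IH] n Hn //=; case: eqP => // Hn1.
apply: uniq_flatten_map; first exact: iota_uniq.
- move=> k; rewrite mem_iota => Hk; apply: allpairs_uniq; try (apply: IH; lia).
  by move=> [a b] [c d] _ _ /= [-> ->].
- move=> x y z; rewrite !mem_iota => Hx Hy /allpairsP[[a b] [Ha Hb /= ->]].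
  move=> /allpairsP[[c d] [Hc Hd /= [E1 E2]]]; subst c d.
  move: Ha Hc; rewrite /= !mem_trees_rec; try lia.
Qed.

Lemma mem_Omega n t : (t \in Omega n) = (leaves t == n).
Proof. exact: mem_trees_rec. Qed.

Lemma uniq_Omega n : uniq (Omega n).
Proof. exact: uniq_trees_rec. Qed.

(* Main.v *)
Require Import Defs.
From HB Require Import structures.
From mathcomp Require Import all_boot all_order all_algebra.
From mathcomp Require Import mpoly.
From mathcomp Require Import zify ring lra.
Import Order.TTheory GRing.Theory Num.Theory.
Set Implicit Arguments. Unset Strict Implicit. Unset Printing Implicit Defensive.

Lemma hs_gt0 t : 0 < hs t.
Proof. elim: t => //= l IHl r IHr; case: eqP => _; lia. Qed.

Lemma hs_Node_ge2 l r : 2 <= hs (Node l r).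
Proof. have := hs_gt0 l; have := hs_gt0 r; rewrite /=; case: eqP => E; lia. Qed.

Lemma bt_par t : branch_tops 2 t false = (hs t == 2) + branch_tops 2 t true.
Proof. by case: t => [|l r] //=; rewrite andbT andbF add0n addnA. Qed.

Lemma bt_Leaf b : branch_tops 2 Leaf b = 0.
Proof. by []. Qed.

Lemma S2_Node l r :
  S2 (Node l r) = S2 l + S2 r + ((l == Leaf) && (r == Leaf)).
Proof.
rewrite /S2 /branches.
have E : branch_tops 2 (Node l r) false = (hs (Node l r) == 2) +
  (branch_tops 2 l (hs (Node l r) == 2) + branch_tops 2 r (hs (Node l r) == 2)).
  by rewrite [LHS]/= andbT.
rewrite E {E}.
have Hh : hs (Node l r) = if hs l == hs r then (hs l).+1 else maxn (hs l) (hs r) by [].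
move: Hh; generalize (hs (Node l r)) => h Hh.
case: l Hh => [|l1 l2]; case: r => [|r1 r2] Hh.
- by rewrite Hh.
- rewrite bt_par !bt_Leaf.
  have H := hs_Node_ge2 r1 r2.
  move: H Hh; set b := hs (Node r1 r2) => H Hh.
  have -> : h = b by move: Hh; rewrite [hs Leaf]/=; case: eqP => E1; lia.
  rewrite [Leaf == Leaf]eqxx [Node _ _ == Leaf]/= /=.
  case: (b == 2) => /=; lia.
- rewrite bt_par !bt_Leaf.
  have H := hs_Node_ge2 l1 l2.
  move: H Hh; set b := hs (Node l1 l2) => H Hh.
  have -> : h = b by move: Hh; rewrite [hs Leaf]/=; case: eqP => E1; lia.
  rewrite [Node _ _ == Leaf]/= /=.
  case: (b == 2) => /=; lia.
- have H1 := hs_Node_ge2 l1 l2; have H2 := hs_Node_ge2 r1 r2.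
  move: H1 H2 Hh; set a := hs (Node l1 l2); set b := hs (Node r1 r2) => H1 H2 Hh.
  have -> : (h == 2) = false.
    by apply/eqP; move: Hh; case: eqP => E1; lia.
  by rewrite /= addn0.
Qed.

Lemma Omega_perm m k : k <= m -> perm_eq (trees_rec m k) (Omega k).
Proof.
move=> H; apply: uniq_perm; [exact: uniq_trees_rec | exact: uniq_Omega |].
by move=> t; rewrite mem_trees_rec // mem_Omega.
Qed.

Local Open Scope ring_scope.

Lemma Omega_split (R : nzRingType) n (F : tree -> R) : (2 <= n)%N ->
  \sum_(t <- Omega n) F t =
  \sum_(1 <= k < n) \sum_(l <- Omega k) \sum_(r <- Omega (n - k)) F (Node l r).
Proof.
case: n => [|m] // Hm; rewrite /Omega /=.
have -> : (m.+1 == 1)%N = false by apply/eqP; lia.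
rewrite big_flatten /= big_map /index_iota subn1 /=.
apply: eq_big_seq => k; rewrite mem_iota => Hk.
rewrite big_allpairs_dep (perm_big _ (Omega_perm _)); last by lia.
apply: eq_bigr => l _; apply: perm_big; apply: Omega_perm; lia.
Qed.

Section Main.
Variable R : realFieldType.

Definition sz n : R := (size (Omega n))%:R.

Lemma sz_rec n : (2 <= n)%N -> sz n = \sum_(1 <= k < n) sz k * sz (n - k).
Proof.
move=> H; rewrite {1}/sz -sum1_size natr_sum (Omega_split _ H).
apply: eq_bigr => k _; rewrite /sz -!sum1_size !natr_sum mulr_suml.
apply: eq_bigr => l _; rewrite mul1r; apply: eq_bigr => r _; by [].
Qed.

Lemma sum_sym N (g : nat -> R) :
  \sum_(1 <= i < N) g i = \sum_(1 <= i < N) g (N - i)%N.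
Proof. rewrite big_nat_rev; apply: eq_big_nat => i Hi; congr g; lia. Qed.

Lemma sz1 : sz 1 = 1. Proof. by []. Qed.
Lemma sz2 : sz 2 = 1. Proof. by []. Qed.

Lemma szC n : (2 <= n)%N -> n%:R * sz n = 2 * (2 * n%:R - 3) * sz n.-1.
Proof.
elim: n {-2}n (leqnn n) => [|n IH] m Hm H2; first lia.
case: (ltngtP m 2) => Hm2; first lia; last by subst m; rewrite sz2 sz1 /=; lra.
have {}IH : forall k, (2 <= k < m)%N -> k%:R * sz k = 2 * (2 * k%:R - 3) * sz k.-1.
  move=> k /andP[H1 H3]; apply: IH => //; lia.
set N := m.-1.
have HN : m = N.+1 by rewrite /N; lia.
have E1 : m%:R * sz m = 2 * \sum_(1 <= k < m) k%:R * (sz k * sz (m - k)).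
  rewrite sz_rec; last lia.
  rewrite mulr_sumr.
  have -> : \sum_(1 <= i < m) m%:R * (sz i * sz (m - i)) =
    \sum_(1 <= i < m) (i%:R * (sz i * sz (m - i)) + (m - i)%:R * (sz (m - i) * sz (m - (m - i)))).
    apply: eq_big_nat => i Hi; rewrite subKn; last lia.
    rewrite [sz (m - i) * _]mulrC -mulrDl -natrD; congr (_%:R * _); lia.
  rewrite big_split /= -(sum_sym m (fun i => i%:R * (sz i * sz (m - i)))).
  by rewrite mulr2n mulrDl !mul1r.
rewrite E1 big_ltn; last lia.
rewrite big_add1 -/N.
have E2 : \sum_(1 <= i < N) (i.+1)%:R * (sz i.+1 * sz (m - i.+1)) =
          \sum_(1 <= i < N) 2 * (2 * i%:R - 1) * (sz i * sz (N - i)).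
  apply: eq_big_nat => i Hi.
  rewrite mulrA IH; last lia.
  have -> : (m - i.+1 = N - i)%N by lia.
  rewrite -mulrA /= -addn1 natrD; ring.
rewrite E2.
have E3 : \sum_(1 <= i < N) 2 * (2 * i%:R - 1) * (sz i * sz (N - i)) =
          (2 * N%:R - 2) * sz N.
  have HN2 : (2 <= N)%N by lia.
  apply: (@mulIf _ 2); first by rewrite pnatr_eq0.
  rewrite mulr2n mulrDr mulr1 {2}(sum_sym N) -big_split /= (sz_rec HN2) [RHS]mulrC !mulr_sumr.
  apply: eq_big_nat => i Hi; rewrite subKn; last lia.
  rewrite natrB; last lia.
  rewrite [sz (N - i) * _]mulrC; ring.
rewrite E3 sz1 -/N mul1r /=.
rewrite HN subn1 /= -addn1 natrD; ring.
Qed.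


Definition W (f : nat -> R) N := \sum_(t <- Omega N) f (S2 t).
Definition K (f : nat -> R) a b :=
  \sum_(l <- Omega a) \sum_(r <- Omega b) f (S2 l + S2 r)%N.

Lemma W_split f N : (3 <= N)%N -> W f N = \sum_(1 <= i < N) K f i (N - i).
Proof.
move=> HN; rewrite /W (Omega_split _ (ltnW HN)); apply: eq_big_nat => i Hi.
apply: eq_big_seq => l; rewrite mem_Omega => /eqP Hl.
apply: eq_big_seq => r; rewrite mem_Omega => /eqP Hr.
rewrite S2_Node.
have -> : ((l == Leaf) && (r == Leaf)) = false.
  case: l Hl => [|? ?] /= Hl; case: r Hr => [|? ?] /= Hr //; lia.
by rewrite addn0.
Qed.

Lemma Ksym f a b : K f a b = K f b a.
Proof.
rewrite /K exchange_big; apply: eq_bigr => l _; apply: eq_bigr => r _.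
by rewrite addnC.
Qed.

Definition Aterm (f : nat -> R) m k := \sum_(l <- Omega k) \sum_(r <- Omega (m - k))
   ((k%:R - 2 * (S2 l)%:R) * f (S2 l + S2 r)%N).
Definition Bterm (f : nat -> R) m k := \sum_(l <- Omega k) \sum_(r <- Omega (m - k))
   (((m - k)%:R - 2 * (S2 r)%:R) * f (S2 l + S2 r)%N).

Lemma Omega1 : Omega 1 = [:: Leaf]. Proof. by []. Qed.
Lemma Omega2 : Omega 2 = [:: Node Leaf Leaf]. Proof. by []. Qed.

Lemma lemB n (f : nat -> R) : (2 <= n)%N ->
  \sum_(t <- Omega n) (n%:R - 2 * (S2 t)%:R) * f (S2 t) = 2 * (n - 2)%:R * W f n.-1.
Proof.
elim: n {-2}n (leqnn n) f => [|n IH] m Hm f H2; first lia.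
case: (ltngtP m 2) => Hm2; first lia; last first.
  subst m; rewrite Omega2 big_seq1.
  have -> : S2 (Node Leaf Leaf) = 1%N by [].
  by rewrite subnn mulr1 subrr mul0r mulr0 mul0r.
have {}IH : forall k g, (2 <= k < m)%N ->
   \sum_(t <- Omega k) (k%:R - 2 * (S2 t)%:R) * g (S2 t) = 2 * (k - 2)%:R * W g k.-1.
  move=> k g /andP[H1 H3]; apply: IH => //; lia.
set N := m.-1.
have HN : m = N.+1 by rewrite /N; lia.
have E1 : \sum_(t <- Omega m) (m%:R - 2 * (S2 t)%:R) * f (S2 t) =
          \sum_(1 <= k < m) (Aterm f m k + Bterm f m k).
  rewrite (Omega_split _ (ltnW Hm2)); apply: eq_big_nat => k Hk.
  rewrite /Aterm /Bterm -big_split; apply: eq_big_seq => l; rewrite mem_Omega => /eqP Hl.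
  rewrite -big_split; apply: eq_big_seq => r; rewrite mem_Omega => /eqP Hr /=.
  rewrite S2_Node.
  have -> : ((l == Leaf) && (r == Leaf)) = false.
    case: l Hl => [|? ?] /= Hl; case: r Hr => [|? ?] /= Hr //; lia.
  rewrite addn0 natrD natrB; last lia.
  ring.
have E2 : \sum_(1 <= k < m) Bterm f m k = \sum_(1 <= k < m) Aterm f m k.
  rewrite (sum_sym m (Bterm f m)); apply: eq_big_nat => k Hk.
  rewrite /Bterm /Aterm subKn; last lia.
  rewrite exchange_big; apply: eq_bigr => l _; apply: eq_bigr => r _.
  by rewrite addnC.
have E3 : Aterm f m 1 = W f N.
  rewrite /Aterm Omega1 big_seq1 subn1 -/N /W; apply: eq_bigr => r _.
  by rewrite /= mulr0 subr0 mul1r.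
have E4 : forall k, (2 <= k < m)%N -> Aterm f m k = 2 * (k - 2)%:R * K f k.-1 (m - k).
  move=> k Hk; rewrite /Aterm exchange_big /=.
  under eq_bigr => r _ do rewrite (IH k (fun a => f (a + S2 r)%N) Hk).
  rewrite -mulr_sumr /K /W exchange_big /=; congr (_ * _).
have E5 : \sum_(1 <= i < N) 2 * (i%:R - 1) * K f i (N - i) = (N%:R - 2) * W f N.
  case: (ltngtP N 2) => HN2; first lia; last first.
    by rewrite HN2 big_nat1 subrr mulr0 mul0r subrr mul0r.
  apply: (@mulIf _ 2); first by rewrite pnatr_eq0.
  rewrite mulr2n mulrDr mulr1 {2}(sum_sym N) -big_split /= (W_split _ HN2) [RHS]mulrC !mulr_sumr.
  apply: eq_big_nat => i Hi; rewrite (Ksym _ (N - i)) subKn; last lia.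
  rewrite natrB; last lia.
  ring.
rewrite E1 big_split /= E2 big_ltn; last lia.
rewrite big_add1 -/N E3.
have -> : \sum_(1 <= i < N) Aterm f m i.+1 = \sum_(1 <= i < N) 2 * (i%:R - 1) * K f i (N - i).
  apply: eq_big_nat => i Hi; rewrite E4; last lia.
  have -> : (m - i.+1 = N - i)%N by lia.
  rewrite /= natrB; last lia.
  by rewrite -addn1 natrD; ring.
rewrite E5 HN /= natrB; last lia.
rewrite -addn1 natrD; ring.
Qed.
End Main.

Fixpoint comb (k : nat) : tree := match k with 0 => Leaf | k.+1 => Node Leaf (comb k) end.
Lemma leaves_comb k : leaves (comb k) = k.+1.
Proof. by elim: k => //= k ->. Qed.

Lemma sz_neq0 (R : realFieldType) n : (1 <= n)%N -> sz R n != 0.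
Proof.
move=> H; rewrite /sz pnatr_eq0.
have : comb n.-1 \in Omega n by rewrite mem_Omega leaves_comb; apply/eqP; lia.
by case: (Omega n).
Qed.

Theorem proposition1 (R : realFieldType) (p : {mpoly R[2]}) (n : nat) :
  (2 <= n)%N ->
  expect n (fun t => (S2 t)%:R * ev2 p (S2 t)%:R n%:R)
  = n%:R / 2 * expect n (fun t => ev2 p (S2 t)%:R n%:R)
    - (n%:R * (n%:R - 2)) / (2 * (2 * n%:R - 3))
      * expect n.-1 (fun t => ev2 p (S2 t)%:R n%:R).
Proof.
move=> Hn.
set g := fun k : nat => ev2 p k%:R n%:R.
have HB := @lemB R n g Hn.
have HC := szC R Hn.
rewrite /expect.
change (\sum_(t <- Omega n) ev2 p (S2 t)%:R n%:R) with (W g n).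
change (\sum_(t <- Omega n.-1) ev2 p (S2 t)%:R n%:R) with (W g n.-1).
change (size (Omega n))%:R with (sz R n).
change (size (Omega n.-1))%:R with (sz R n.-1).
change (\sum_(t <- Omega n) (S2 t)%:R * ev2 p (S2 t)%:R n%:R) with
       (\sum_(t <- Omega n) (S2 t)%:R * g (S2 t)).
move: HB; rewrite natrB // (eq_bigr (fun t => n%:R * g (S2 t) - 2 * ((S2 t)%:R * g (S2 t)))); last first.
  by move=> t _; rewrite mulrBl mulrA.
rewrite big_split /= sumrN -!mulr_sumr -/(W g n) => HB.
have Hs := sz_neq0 R (ltnW Hn).
have Hs' := sz_neq0 R (n := n.-1) ltac:(lia).
have Hn2 : (2 : R) <= n%:R by rewrite (ler_nat R 2 n).
have H3 : 2 * n%:R - 3 != 0 :> R by rewrite lt0r_neq0 //; lra.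
have Hn0 : n%:R != 0 :> R by rewrite lt0r_neq0 //; lra.
have E : sz R n.-1 = n%:R * sz R n / (2 * (2 * n%:R - 3)).
  rewrite HC; field; lra.
have E2 : \sum_(t <- Omega n) (S2 t)%:R * g (S2 t) = (n%:R * W g n - 2 * (n%:R - 2) * W g n.-1) / 2.
  by rewrite -HB; field.
rewrite E2 E; field.
by rewrite Hs H3 Hn0.
Qed.
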